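(* Let $U$ be an open subset of hyperbolic $3$-space $H^3$ on which the geodesic polar coordinates $(r,\theta,\phi)$, $r>0$, $\theta\in(0,\pi)$, are valid, so that $g_{H^3}=\mathrm{d}r^2+\sinh^2 r\,(\mathrm{d}\theta^2+\sin^2\theta\,\mathrm{d}\phi^2)$, and let $\Lambda:U\to(0,\infty)$ be a smooth function satisfying the Helmholtz equation $$\sinh^2 r\left(\partial_r^2\Lambda+2\coth r\,\partial_r\Lambda+\Lambda\right)+\partial_\theta^2\Lambda+\cot\theta\,\partial_\theta\Lambda+\frac{1}{\sin^2\theta}\partial_\phi^2\Lambda=0,$$ i.e. $\triangle_{H^3}\Lambda+\Lambda=0$. Define the $\mathfrak{su}(2)$-valued function $\Phi$ and $1$-form $\mathcal{A}$ on $U$ by $$\Phi=\frac{1}{2\Lambda}\left(\partial_r\Lambda\,\mathbf{i}+\frac{\partial_\theta\Lambda}{\sinh r}\,\mathbf{j}+\frac{\partial_\phi\Lambda}{\sinh r\sin\theta}\,\mathbf{k}\right),$$ $$\mathcal{A}=\frac{\mathbf{i}}{2}\left[\left(\cos\theta+\sin\theta\,\frac{\partial_\theta\Lambda}{\Lambda}\right)\mathrm{d}\phi-\frac{\partial_\phi\Lambda}{\Lambda\sin\theta}\,\mathrm{d}\theta\right]-\frac{\mathbf{j}}{2}\left[\left(\cosh r+\sinh r\,\frac{\partial_r\Lambda}{\Lambda}\right)\sin\theta\,\mathrm{d}\phi-\frac{\partial_\phi\Lambda}{\Lambda\sinh r\sin\theta}\,\mathrm{d}r\right]+\frac{\mathbf{k}}{2}\left[\left(\cosh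 r+\sinh r\,\frac{\partial_r\Lambda}{\Lambda}\right)\mathrm{d}\theta-\frac{\partial_\theta\Lambda}{\Lambda\sinh r}\,\mathrm{d}r\right].$$ Then $(\Phi,\mathcal{A})$ satisfies the Bogomolny equations $\mathrm{d}_{\mathcal{A}}\Phi=-\ast_{H^3}\mathcal{F}$ on $U$, where $\mathcal{F}$ is the curvature of $\mathcal{A}$.
   Context: $\mathfrak{su}(2)$ is identified with the imaginary quaternions, spanned by the unit quaternions $\mathbf{i},\mathbf{j},\mathbf{k}$ (with $\mathbf{i}\mathbf{j}=\mathbf{k}$ etc.). For an $\mathfrak{su}(2)$-valued $1$-form $\mathcal{A}$ and function $\Phi$: $\mathrm{d}_{\mathcal{A}}\Phi=\mathrm{d}\Phi+[\mathcal{A},\Phi]$ with $[X,Y]=XY-YX$ (quaternion product), and $\mathcal{F}=\mathrm{d}\mathcal{A}+\mathcal{A}\wedge\mathcal{A}$. $\ast_{H^3}$ is the Hodge star of $g_{H^3}$ with orientation given by the volume form $\sinh^2 r\sin\theta\,\mathrm{d}r\wedge\mathrm{d}\theta\wedge\mathrm{d}\phi$. *)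

(* Defs.v *)
From Stdlib Require Import Reals List.
From Coquelicot Require Import Coquelicot.
Open Scope R_scope.

Record quat := Quat { q0 : R; q1 : R; q2 : R; q3 : R }.

Definition qadd (x y : quat) : quat :=
  Quat (q0 x + q0 y) (q1 x + q1 y) (q2 x + q2 y) (q3 x + q3 y).
Definition qopp (x : quat) : quat := Quat (- q0 x) (- q1 x) (- q2 x) (- q3 x).
Definition qsub (x y : quat) : quat := qadd x (qopp y).
Definition qscal (a : R) (x : quat) : quat :=
  Quat (a * q0 x) (a * q1 x) (a * q2 x) (a * q3 x).
Definition qmul (x y : quat) : quat :=
  Quat (q0 x * q0 y - q1 x * q1 y - q2 x * q2 y - q3 x * q3 y)
       (q0 x * q1 y + q1 x * q0 y + q2 x * q3 y - q3 x * q2 y)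
       (q0 x * q2 y - q1 x * q3 y + q2 x * q0 y + q3 x * q1 y)
       (q0 x * q3 y + q1 x * q2 y - q2 x * q1 y + q3 x * q0 y).
Definition qi : quat := Quat 0 1 0 0.
Definition qj : quat := Quat 0 0 1 0.
Definition qk : quat := Quat 0 0 0 1.
Definition qbr (x y : quat) : quat := qsub (qmul x y) (qmul y x).

Inductive dir := Dr | Dth | Dph.

Definition pd (d : dir) (f : R -> R -> R -> R) : R -> R -> R -> R :=
  match d with
  | Dr  => fun r t p => Derive (fun x => f x t p) r
  | Dth => fun r t p => Derive (fun x => f r x p) t
  | Dph => fun r t p => Derive (fun x => f r t x) p
  end.

Definition ex_pd (d : dir) (f : R -> R -> R -> R) (r t p : R) : Prop :=
  match d with
  | Dr  => ex_derive (fun x => f x t p) r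
  | Dth => ex_derive (fun x => f r x p) t
  | Dph => ex_derive (fun x => f r t x) p
  end.

Definition uncurry3 (f : R -> R -> R -> R) : R * R * R -> R :=
  fun q => f (fst (fst q)) (snd (fst q)) (snd q).

Definition smooth_on (U : R -> R -> R -> Prop) (f : R -> R -> R -> R) : Prop :=
  forall (l : list dir) (r t p : R), U r t p ->
    let g := fold_right pd f l in
    continuous (uncurry3 g) (r, t, p) /\ (forall d, ex_pd d g r t p).

Definition open3 (U : R -> R -> R -> Prop) : Prop :=
  open (fun q : R * R * R => U (fst (fst q)) (snd (fst q)) (snd q)).

Definition pdQ (d : dir) (f : R -> R -> R -> quat) : R -> R -> R -> quat :=
  fun r t p =>
    Quat (pd d (fun a b c => q0 (f a b c)) r t p)
         (pd d (fun a b c => q1 (f a b c)) r t p)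
         (pd d (fun a b c => q2 (f a b c)) r t p)
         (pd d (fun a b c => q3 (f a b c)) r t p).

Definition coth (x : R) : R := cosh x / sinh x.
Definition cot (x : R) : R := cos x / sin x.

Definition helmholtz_at (L : R -> R -> R -> R) (r t p : R) : Prop :=
  (sinh r) ^ 2 * (pd Dr (pd Dr L) r t p + 2 * coth r * pd Dr L r t p + L r t p)
  + pd Dth (pd Dth L) r t p + cot t * pd Dth L r t p
  + / (sin t) ^ 2 * pd Dph (pd Dph L) r t p = 0.

Definition PhiL (L : R -> R -> R -> R) : R -> R -> R -> quat :=
  fun r t p =>
    qscal (/ (2 * L r t p))
      (qadd (qscal (pd Dr L r t p) qi)
        (qadd (qscal (pd Dth L r t p / sinh r) qj)
              (qscal (pd Dph L r t p / (sinh r * sin t)) qk))).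

Definition AL (L : R -> R -> R -> R) (d : dir) : R -> R -> R -> quat :=
  fun r t p =>
    let l := L r t p in
    let Lr := pd Dr L r t p in
    let Lt := pd Dth L r t p in
    let Lp := pd Dph L r t p in
    match d with
    | Dr =>
        qadd (qscal (- / 2) (qscal (- (Lp / (l * sinh r * sin t))) qj))
             (qscal (/ 2) (qscal (- (Lt / (l * sinh r))) qk))
    | Dth =>
        qadd (qscal (/ 2) (qscal (- (Lp / (l * sin t))) qi))
             (qscal (/ 2) (qscal (cosh r + sinh r * (Lr / l)) qk))
    | Dph =>
        qadd (qscal (/ 2) (qscal (cos t + sin t * (Lt / l)) qi))
             (qscal (- / 2) (qscal ((cosh r + sinh r * (Lr / l)) * sin t) qj))
    end.

Definition covd (A : dir -> R -> R -> R -> quat) (Phi : R -> R -> R -> quat)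
  (d : dir) (r t p : R) : quat :=
  qadd (pdQ d Phi r t p) (qbr (A d r t p) (Phi r t p)).

(* curvature F = dA + A /\ A, component F_{ab} (coefficient of dx^a /\ dx^b):
   F_ab = d_a A_b - d_b A_a + A_a A_b - A_b A_a *)
Definition curv (A : dir -> R -> R -> R -> quat) (a b : dir) (r t p : R) : quat :=
  qadd (qsub (pdQ a (A b) r t p) (pdQ b (A a) r t p))
       (qsub (qmul (A a r t p) (A b r t p)) (qmul (A b r t p) (A a r t p))).

Definition gH (d : dir) (r t p : R) : R :=
  match d with
  | Dr => 1
  | Dth => (sinh r) ^ 2
  | Dph => (sinh r) ^ 2 * (sin t) ^ 2
  end.

(* volume density sqrt(det g) = sinh^2 r sin theta (positive orientation
   dr /\ dtheta /\ dphi) *)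
Definition volH (r t p : R) : R := (sinh r) ^ 2 * sin t.

(* Hodge star of a 2-form F (components F_ab) for the diagonal metric gH:
   *(dx^b /\ dx^c) = sqrt(det g) g^{bb} g^{cc} dx^a for (a,b,c) a cyclic
   permutation of (r,theta,phi).  Returns the component along dx^a. *)
Definition hodge2 (F : dir -> dir -> R -> R -> R -> quat) (a : dir) (r t p : R) : quat :=
  let (b, c) := match a with
                | Dr => (Dth, Dph) | Dth => (Dph, Dr) | Dph => (Dr, Dth) end in
  qscal (volH r t p / (gH b r t p * gH c r t p)) (F b c r t p).

(* Main.v *)
Require Import Defs.
From Stdlib Require Import Reals Lra List.
From Coquelicot Require Import Coquelicot.
Open Scope R_scope.

Lemma ballR (x y e : R) : Rabs (y - x) < e -> ball x e y.
Proof. intro H. exact H. Qed.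

Lemma cont3 (g : R -> R -> R -> R) r t p : continuous (uncurry3 g) (r,t,p) ->
  forall eps : posreal, exists del : posreal, forall r' t' p',
   Rabs (r' - r) < del -> Rabs (t' - t) < del -> Rabs (p' - p) < del ->
   Rabs (g r' t' p' - g r t p) < eps.
Proof.
  intros H eps. apply filterlim_locally with (eps := eps) in H.
  destruct H as [d Hd]. exists d. intros r' t' p' H1 H2 H3.
  apply (Hd (r', t', p')). repeat split; apply ballR; assumption.
Qed.

Lemma nbhd (U : R -> R -> R -> Prop) r t p : open3 U -> U r t p ->
  exists del : posreal, forall r' t' p',
   Rabs (r' - r) < del -> Rabs (t' - t) < del -> Rabs (p' - p) < del -> U r' t' p'.
Proof.
  intros HU Hx. specialize (HU (r,t,p) Hx). destruct HU as [d Hd].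
  exists d. intros r' t' p' H1 H2 H3.
  apply (Hd (r', t', p')). repeat split; apply ballR; assumption.
Qed.

Lemma Rabs_self x (d : posreal) : Rabs (x - x) < d.
Proof. rewrite Rminus_eq_0, Rabs_R0. apply cond_pos. Qed.

Lemma schw_rt U L r t p : open3 U -> smooth_on U L -> U r t p ->
  pd Dr (pd Dth L) r t p = pd Dth (pd Dr L) r t p.
Proof.
  intros HU HS Hx. destruct (nbhd U r t p HU Hx) as [d Hd].
  apply (Schwarz (fun u v => L u v p) r t).
  - exists d. intros u v Hu Hv.
    assert (Hy : U u v p) by (apply Hd; auto using Rabs_self).
    destruct (HS nil u v p Hy) as [_ A].
    destruct (HS (Dth :: nil) u v p Hy) as [_ B].
    destruct (HS (Dr :: nil) u v p Hy) as [_ C].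
    split; [exact (A Dr)|split; [exact (A Dth)| split; [exact (B Dr)| exact (C Dth)]]].
  - intro eps. destruct (HS (Dr :: Dth :: nil) r t p Hx) as [Hc _].
    destruct (cont3 _ r t p Hc eps) as [e He]. exists e. intros u v Hu Hv.
    exact (He u v p Hu Hv (Rabs_self _ _)).
  - intro eps. destruct (HS (Dth :: Dr :: nil) r t p Hx) as [Hc _].
    destruct (cont3 _ r t p Hc eps) as [e He]. exists e. intros u v Hu Hv.
    exact (He u v p Hu Hv (Rabs_self _ _)).
Qed.

Lemma schw_rp U L r t p : open3 U -> smooth_on U L -> U r t p ->
  pd Dr (pd Dph L) r t p = pd Dph (pd Dr L) r t p.
Proof.
  intros HU HS Hx. destruct (nbhd U r t p HU Hx) as [d Hd].
  apply (Schwarz (fun u v => L u t v) r p).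
  - exists d. intros u v Hu Hv.
    assert (Hy : U u t v) by (apply Hd; auto using Rabs_self).
    destruct (HS nil u t v Hy) as [_ A].
    destruct (HS (Dph :: nil) u t v Hy) as [_ B].
    destruct (HS (Dr :: nil) u t v Hy) as [_ C].
    split; [exact (A Dr)|split; [exact (A Dph)| split; [exact (B Dr)| exact (C Dph)]]].
  - intro eps. destruct (HS (Dr :: Dph :: nil) r t p Hx) as [Hc _].
    destruct (cont3 _ r t p Hc eps) as [e He]. exists e. intros u v Hu Hv.
    exact (He u t v Hu (Rabs_self _ _) Hv).
  - intro eps. destruct (HS (Dph :: Dr :: nil) r t p Hx) as [Hc _].
    destruct (cont3 _ r t p Hc eps) as [e He]. exists e. intros u v Hu Hv.
    exact (He u t v Hu (Rabs_self _ _) Hv).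
Qed.

Lemma schw_tp U L r t p : open3 U -> smooth_on U L -> U r t p ->
  pd Dth (pd Dph L) r t p = pd Dph (pd Dth L) r t p.
Proof.
  intros HU HS Hx. destruct (nbhd U r t p HU Hx) as [d Hd].
  apply (Schwarz (fun u v => L r u v) t p).
  - exists d. intros u v Hu Hv.
    assert (Hy : U r u v) by (apply Hd; auto using Rabs_self).
    destruct (HS nil r u v Hy) as [_ A].
    destruct (HS (Dph :: nil) r u v Hy) as [_ B].
    destruct (HS (Dth :: nil) r u v Hy) as [_ C].
    split; [exact (A Dth)|split; [exact (A Dph)| split; [exact (B Dth)| exact (C Dph)]]].
  - intro eps. destruct (HS (Dth :: Dph :: nil) r t p Hx) as [Hc _].
    destruct (cont3 _ r t p Hc eps) as [e He]. exists e. intros u v Hu Hv.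
    exact (He r u v (Rabs_self _ _) Hu Hv).
  - intro eps. destruct (HS (Dph :: Dth :: nil) r t p Hx) as [Hc _].
    destruct (cont3 _ r t p Hc eps) as [e He]. exists e. intros u v Hu Hv.
    exact (He r u v (Rabs_self _ _) Hu Hv).
Qed.

Lemma pdr_is (f : R -> R -> R -> R) r t p v :
  is_derive (fun x => f x t p) r v -> pd Dr f r t p = v.
Proof. intro H; apply is_derive_unique; exact H. Qed.
Lemma pdt_is (f : R -> R -> R -> R) r t p v :
  is_derive (fun x => f r x p) t v -> pd Dth f r t p = v.
Proof. intro H; apply is_derive_unique; exact H. Qed.
Lemma pdp_is (f : R -> R -> R -> R) r t p v :
  is_derive (fun x => f r t x) p v -> pd Dph f r t p = v.
Proof. intro H; apply is_derive_unique; exact H. Qed.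

Lemma quat_eq a b c d a' b' c' d' : a = a' -> b = b' -> c = c' -> d = d' ->
  Quat a b c d = Quat a' b' c' d'.
Proof. intros; subst; reflexivity. Qed.

Ltac nz := repeat match goal with
  | |- _ /\ _ => split
  | |- True => exact I
  | |- _ * _ <> 0 => apply Rmult_integral_contrapositive_currified
  | |- 2 <> 0 => lra
  | |- _ <> 0 => apply Rgt_not_eq; assumption
  end.

Ltac dside := cbv beta; cbn [AL PhiL q0 q1 q2 q3 qadd qscal qopp qi qj qk qmul]; auto_derive;
   [ nz; try assumption | reflexivity ].

Ltac notatom f := assert_fails (is_var f); lazymatch f with pd _ _ => fail | _ => idtac end.
Ltac dstep := match goal with
  | |- context [pd Dr ?f ?r ?t ?p] => notatom f;
      erewrite (pdr_is f r t p); [| dside]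
  | |- context [pd Dth ?f ?r ?t ?p] => notatom f;
      erewrite (pdt_is f r t p); [| dside]
  | |- context [pd Dph ?f ?r ?t ?p] => notatom f;
      erewrite (pdp_is f r t p); [| dside]
  end.

Lemma cosh_sinh x : cosh x * cosh x = 1 + sinh x * sinh x.
Proof.
  unfold cosh, sinh. rewrite exp_Ropp.
  assert (exp x <> 0) by (apply Rgt_not_eq, exp_pos). field; auto.
Qed.

Ltac norm_atoms L r t p :=
  change (Derive (fun x => L x t p) r) with (pd Dr L r t p) in *;
  change (Derive (fun x => L r x p) t) with (pd Dth L r t p) in *;
  change (Derive (fun x => L r t x) p) with (pd Dph L r t p) in *;
  change (Derive (fun x => Derive (fun x0 => L x0 t p) x) r) with (pd Dr (pd Dr L) r t p) in *;
  change (Derive (fun x => Derive (fun x0 => L x x0 p) t) r) with (pd Dr (pd Dth L) r t p) in *;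
  change (Derive (fun x => Derive (fun x0 => L x t x0) p) r) with (pd Dr (pd Dph L) r t p) in *;
  change (Derive (fun x => Derive (fun x0 => L x0 x p) r) t) with (pd Dth (pd Dr L) r t p) in *;
  change (Derive (fun x => Derive (fun x0 => L r x0 p) x) t) with (pd Dth (pd Dth L) r t p) in *;
  change (Derive (fun x => Derive (fun x0 => L r x x0) p) t) with (pd Dth (pd Dph L) r t p) in *;
  change (Derive (fun x => Derive (fun x0 => L x0 t x) r) p) with (pd Dph (pd Dr L) r t p) in *;
  change (Derive (fun x => Derive (fun x0 => L r x0 x) t) p) with (pd Dph (pd Dth L) r t p) in *;
  change (Derive (fun x => Derive (fun x0 => L r t x0) x) p) with (pd Dph (pd Dph L) r t p) in *.

Ltac fin K M := match goal with
  | Hp : ?P = 0, Hch : ?ch * ?ch = 1 + ?sh * ?sh |- _ =>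
    apply Rminus_diag_uniq; transitivity (K * P + M * (ch*ch - (1+sh*sh)));
      [ring | rewrite Hp, Hch; ring] end.

Lemma core (L : R -> R -> R -> R) r t p :
  (forall d, ex_pd d L r t p) ->
  (forall d d', ex_pd d (pd d' L) r t p) ->
  0 < L r t p -> 0 < sinh r -> 0 < sin t ->
  pd Dr (pd Dth L) r t p = pd Dth (pd Dr L) r t p ->
  pd Dr (pd Dph L) r t p = pd Dph (pd Dr L) r t p ->
  pd Dth (pd Dph L) r t p = pd Dph (pd Dth L) r t p ->
  helmholtz_at L r t p ->
  forall d, covd (AL L) (PhiL L) d r t p = qopp (hodge2 (curv (AL L)) d r t p).
Proof.
  intros H1 H2 HL Hsh Hs S1 S2 S3 Hh d.
  pose proof (H1 Dr) as H1r. pose proof (H1 Dth) as H1t. pose proof (H1 Dph) as H1p.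
  pose proof (H2 Dr Dr). pose proof (H2 Dr Dth). pose proof (H2 Dr Dph).
  pose proof (H2 Dth Dr). pose proof (H2 Dth Dth). pose proof (H2 Dth Dph).
  pose proof (H2 Dph Dr). pose proof (H2 Dph Dth). pose proof (H2 Dph Dph).
  cbn [ex_pd] in *.
  pose proof (cosh_sinh r) as Hch. pose proof (sin2_cos2 t) as Hsc.
  unfold helmholtz_at, coth, cot in Hh.
  destruct d;
  unfold covd, hodge2, curv, pdQ, qbr, qsub;
  repeat dstep;
  apply quat_eq; simpl; unfold volH; norm_atoms L r t p; rewrite ?S1, ?S2, ?S3;
  revert Hh;
  generalize (pd Dr L r t p) (pd Dth L r t p) (pd Dph L r t p)
    (pd Dr (pd Dr L) r t p) (pd Dth (pd Dr L) r t p) (pd Dph (pd Dr L) r t p)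
    (pd Dth (pd Dth L) r t p) (pd Dph (pd Dth L) r t p) (pd Dph (pd Dph L) r t p);
  intros lr lt lp lrr lrt lrp ltt ltp lpp Hh;
  revert HL Hsh Hs Hch Hsc Hh;
  generalize (L r t p) (sinh r) (cosh r) (sin t) (cos t);
  intros l sh ch s c HL Hsh Hs Hch Hsc Hh; unfold Rsqr in Hsc; clear -HL Hsh Hs Hch Hsc Hh;
  assert (Hp : s*s*(sh*sh*lrr + 2*sh*ch*lr + sh*sh*l) + s*s*ltt + c*s*lt + lpp =
     s^2 * (sh ^ 2 * (lrr + 2 * (ch / sh) * lr + l) + ltt + c / s * lt + / s ^ 2 * lpp))
   by (field; split; apply Rgt_not_eq; assumption);
  rewrite Hh, Rmult_0_r in Hp; clear Hh.
  all: assert (l <> 0) by lra; assert (sh <> 0) by lra; assert (s <> 0) by lra.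
  all: try (field_simplify_eq; [ | repeat split; assumption]).
  all: first [ring
   | fin (2*l*s) (2*l^2*s^3) | fin (2*l*sh*s) 0 | fin (2*l*sh) 0 ].
Qed.

Theorem mainTheorem1 (U : R -> R -> R -> Prop) (L : R -> R -> R -> R) :
  open3 U ->
  (forall r t p, U r t p -> 0 < r /\ 0 < t < PI) ->
  smooth_on U L ->
  (forall r t p, U r t p -> 0 < L r t p) ->
  (forall r t p, U r t p -> helmholtz_at L r t p) ->
  forall (d : dir) (r t p : R), U r t p ->
    covd (AL L) (PhiL L) d r t p = qopp (hodge2 (curv (AL L)) d r t p).
Proof.
  intros HU Hpos HS HLp Hhelm d r t p Hx.
  destruct (Hpos r t p Hx) as [Hr [Ht1 Ht2]].
  assert (Hsh : 0 < sinh r) by (rewrite <- sinh_0; apply sinh_lt; lra).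
  assert (Hs : 0 < sin t) by (apply sin_gt_0; lra).
  apply core; auto.
  - intro d0. destruct (HS nil r t p Hx) as [_ A]; exact (A d0).
  - intros d0 d'. destruct (HS (d' :: nil) r t p Hx) as [_ A]; exact (A d0).
  - exact (schw_rt U L r t p HU HS Hx).
  - exact (schw_rp U L r t p HU HS Hx).
  - exact (schw_tp U L r t p HU HS Hx).
Qed.
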